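(* If $X$ is a regular set star Menger space, then every closed discrete subspace of $X$ has cardinality less than $\mathfrak c$. Hence $e(X)\leq\mathfrak c$.
   Context: For a family $\mathcal U$ of subsets of $X$ and $A\subseteq X$, $st(A,\mathcal U)=\bigcup\{U\in\mathcal U: U\cap A\neq\emptyset\}$. A space $X$ is set star Menger if for every nonempty $A\subseteq X$ and every sequence $(\mathcal U_n:n\in\omega)$ of families of open subsets of $X$ with $\overline A\subseteq\bigcup\mathcal U_n$ for all $n$, there are finite $\mathcal V_n\subseteq\mathcal U_n$ ($n\in\omega$) with $A\subseteq\bigcup_{n}st(\bigcup\mathcal V_n,\mathcal U_n)$. The extent $e(X)$ is the supremum of cardinalities of closed discrete subsets of $X$; $\mathfrak c=2^{\aleph_0}$. *)

(* Defs.v *)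
From mathcomp Require Import all_boot all_order all_algebra.
From mathcomp Require Import all_classical all_reals all_analysis.
Set Implicit Arguments. Unset Strict Implicit. Unset Printing Implicit Defensive.
Local Open Scope classical_set_scope.

Definition st {T : Type} (A : set T) (U : set (set T)) : set T :=
  \bigcup_(W in [set W | U W /\ W `&` A !=set0]) W.

Definition set_star_Menger (T : topologicalType) : Prop :=
  forall (A : set T) (U : nat -> set (set T)),
    A !=set0 ->
    (forall n W, U n W -> open W) ->
    (forall n, closure A `<=` \bigcup_(W in U n) W) ->
    exists V : nat -> set (set T),
      (forall n, V n `<=` U n /\ finite_set (V n)) /\
      A `<=` \bigcup_n st (\bigcup_(W in V n) W) (U n).

Definition closed_discrete (T : topologicalType) (D : set T) : Prop :=
  closed D /\
  forall x, D x -> exists W : set T, open W /\ W `&` D = [set x].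

(* Main.v *)
Require Import Defs.
From mathcomp Require Import all_boot all_order all_algebra.
From mathcomp Require Import all_classical all_reals all_analysis.
Local Open Scope classical_set_scope.
Local Open Scope card_scope.

Lemma cd_sub_closed (T : topologicalType) (D S : set T) :
  closed_discrete D -> S `<=` D -> closed S.
Proof.
move=> [cD dD] SD y clSy.
have Dy : D y by apply: cD; exact: (closureS SD).
have [W [oW WD]] := dD y Dy.
have [Wy _] : (W `&` D) y by rewrite WD.
have [s [Ss Ws]] := clSy W (open_nbhs_nbhs (conj oW Wy)).
have : (W `&` D) s by split => //; exact: SD.
by rewrite WD => <-.
Qed.

Definition spl (b : nat -> bool) (k : nat) : nat -> bool :=
  fun j => b (pickle ((k, j) : nat * nat)).
Definition jn (S : nat -> nat -> bool) : nat -> bool :=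
  fun m => if (unpickle m : option (nat * nat)) is Some kj then S kj.1 kj.2 else false.
Lemma splK S k : spl (jn S) k = S k.
Proof. by apply: funext => j; rewrite /spl /jn pickleK. Qed.

Definition dec (b : nat -> bool) (n : nat) : set (nat -> bool) :=
  [set a | exists i, spl b 0 (pickle ((n, i) : nat * nat)) /\
                     a = spl b (pickle ((n, i) : nat * nat)).+2].
Lemma no_c_subset (T : topologicalType) : regular_space T -> set_star_Menger T ->
  forall D : set T, closed_discrete D ->
  forall iota : (nat -> bool) -> T, injective iota -> (forall y, D (iota y)) -> False.
Proof.
move=> reg ssm D cdD iota iotaI iotaD.
have hO : forall p, exists Ob : set T,
    [/\ open Ob, Ob (iota p) & forall q, q <> p -> ~ closure Ob (iota q)].
  move=> p.
  have cl1 : closed (D `\` [set iota p]) by apply: cd_sub_closed cdD _ => x [].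
  have nN : nbhs (iota p) (~` (D `\` [set iota p])).
    apply: open_nbhs_nbhs; split; first by rewrite openC.
    by move=> [_ /(_ erefl)].
  have [M nM clM] := reg (iota p) _ nN.
  exists (M°); split; first exact: open_interior.
    exact: nM.
  move=> q qp /(closureS (@interior_subset _ M)) /clM; apply; split => //.
  by move=> /iotaI.
have [Ob HO] := choice hO.
pose G n p := \bigcup_(a in dec p n) Ob a.
pose W n p := if `[< closure (G n p) (iota p) >] then Ob p else Ob p `\` closure (G n p).
have Wo n p : open (W n p).
  rewrite /W; case: ifPn => _; first by case: (HO p).
  rewrite setDE; apply: openI; first by case: (HO p).
  rewrite openC; exact: closed_closure.
have Wp n p : W n p (iota p).
  rewrite /W; case: ifPn => /asboolP h; case: (HO p) => _ Op _ //; split.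
have WO n p : W n p `<=` Ob p.
  by rewrite /W; case: ifPn => _ // x [].
have Oiota p q : Ob p (iota q) -> q = p.
  move=> Opq; apply: contrapT => qp; case: (HO p) => _ _ /(_ q qp); apply.
  exact: subset_closure.
have Winj n p q : W n p = W n q -> p = q.
  by move=> Wpq; apply: (Oiota q p); apply: (WO n q); rewrite -Wpq.
have ne : range iota !=set0 by exists (iota (fun _ => false)); exists (fun _ => false).
have op : forall n (Z : set T), range (W n) Z -> open Z by move=> n _ [p _ <-]; exact: Wo.
have cov : forall n, closure (range iota) `<=` \bigcup_(Z in range (W n)) Z.
  move=> n x clx.
  have cr : closed (range iota) by apply: cd_sub_closed cdD _ => _ [y _ <-].
  have [p _ <-] := cr x clx.
  by exists (W n p) => //; exists p.
have [V [VU Vcov]] := ssm (range iota) (fun n => range (W n)) ne op cov.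
pose E n := W n @^-1` V n.
have Efin n : finite_set (E n).
  apply: finite_preimage; last exact: (VU n).2.
  by move=> p q _ _; exact: Winj.
have [s Es] := choice (fun n => iffLR (finite_seqP (E n)) (Efin n)).
pose d : nat -> bool := fun _ => false.
pose e n i := nth d (s n) i.
pose z : nat -> bool := fun m =>
  if (unpickle m : option (nat * nat)) is Some ni then ~~ spl (e ni.1 ni.2) 1 m else false.
pose S : nat -> nat -> bool := fun k => match k with
  | 0 => fun m => if (unpickle m : option (nat * nat)) is Some ni
                  then (ni.2 < size (s ni.1))%N else false
  | 1 => z
  | m.+2 => if (unpickle m : option (nat * nat)) is Some ni then e ni.1 ni.2 else d
  end.
pose b := jn S.
have decb n : dec b n = E n.
  rewrite Es; apply/seteqP; split => a.
  - move=> [i []]; rewrite /b !splK /= pickleK /= => Li ->.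
    exact: mem_nth.
  - move=> /= ain; exists (index a (s n)); rewrite /b !splK /= pickleK /=.
    by split; [rewrite index_mem | rewrite /e nth_index].
have bE n : ~ E n b.
  rewrite Es => /= bin.
  have ebi : e n (index b (s n)) = b by rewrite /e nth_index.
  have h1 : spl b 1 (pickle ((n, index b (s n)) : nat * nat)) =
      ~~ spl (e n (index b (s n))) 1 (pickle ((n, index b (s n)) : nat * nat)).
    by rewrite {1}/b splK /= /z pickleK.
  rewrite ebi in h1.
  by case: (spl b 1 _) h1.
have Gb n : ~ closure (G n b) (iota b).
  rewrite /G decb.
  have sub : closure (\bigcup_(a in E n) Ob a) `<=` \bigcup_(a in E n) closure (Ob a).
    have cl : closed (\bigcup_(a in E n) closure (Ob a)).
      by apply: closed_bigcup => // *; exact: closed_closure.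
    rewrite [X in _ `<=` X](closure_id _).1 //; apply: closureS.
    by move=> x [a Ea Oax]; exists a => //; exact: subset_closure.
  move=> /sub [a Ea cla].
  have ab : b <> a by move=> ab; apply: (bE n); rewrite ab.
  by case: (HO a) => _ _ /(_ b ab).
have [n _ hn] := Vcov (iota b) (ex_intro2 _ _ b I erefl).
case: hn => Z [[p _ <-{Z}] [y [Wpy [Z1 VZ1 Z1y]]]] Wpb.
have pb := Oiota p b (WO n p _ Wpb); subst p.
have [a _ Z1a] := (VU n).1 _ VZ1.
have Ea : E n a by rewrite /E /= Z1a.
move: Wpy; rewrite /W; case: ifPn => [/asboolP /Gb // | _ [_ ncl]].
apply: ncl; apply: subset_closure; rewrite /G decb; exists a => //.
by apply: (WO n a); rewrite Z1a.
Qed.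

Theorem theorem2p2 (T : topologicalType) :
  regular_space T -> set_star_Menger T ->
  forall D : set T, closed_discrete D ->
    D #<= [set: nat -> bool] /\ ~ ([set: nat -> bool] #<= D).
Proof.
move=> reg ssm D cdD.
have noinj : forall iota : (nat -> bool) -> T, injective iota -> (forall y, D (iota y)) -> False.
  exact: no_c_subset reg ssm D cdD.
split; last first.
  move=> /card_leP [f].
  pose iota (y : nat -> bool) : T := \val (f (exist _ y (mem_set (I : [set: nat -> bool] y)))).
  apply: (noinj iota).
  - by move=> y y' /val_inj /(@inj _ _ _ f); move=> /(_ (in_setT _) (in_setT _)) /(congr1 val).
  - move=> y; rewrite /iota; exact: set_mem (valP _).
pose P (R : set (T * (nat -> bool))) :=
  [/\ forall x y, R (x, y) -> D x,
      forall x y y', R (x, y) -> R (x, y') -> y = y' &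
      forall x x' y, R (x, y) -> R (x', y) -> x = x'].
have [R [[RD Rf Ri] maxR]] : exists R, P R /\ forall B, R `<` B -> ~ P B.
  apply: Zorn_bigcup => F FP Ftot; split.
  - by move=> x y [R0 FR0 R0xy]; case: (FP _ FR0) => h _ _; exact: h R0xy.
  - move=> x y y' [R1 F1 h1] [R2 F2 h2].
    have [s12|s21] := Ftot _ _ F1 F2.
      by case: (FP _ F2) => _ h _; apply: h (s12 _ h1) h2.
    by case: (FP _ F1) => _ h _; apply: h h1 (s21 _ h2).
  - move=> x x' y [R1 F1 h1] [R2 F2 h2].
    have [s12|s21] := Ftot _ _ F1 F2.
      by case: (FP _ F2) => _ _ h; apply: h (s12 _ h1) h2.
    by case: (FP _ F1) => _ _ h; apply: h h1 (s21 _ h2).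
case: (pselect (forall x, D x -> exists y, R (x, y))) => [allD|].
  have hx : forall x, exists y, D x -> R (x, y).
    move=> x; case: (pselect (D x)) => [Dx|nDx].
      by have [y ?] := allD x Dx; exists y.
    by exists (fun _ => false).
  have [f hf] := choice hx.
  apply/pcard_injP; exists f => x x' /set_mem Dx /set_mem Dx' fxx'.
  by apply: (Ri x x' (f x)); [exact: hf | rewrite fxx'; exact: hf].
move=> /existsNP [x0 /not_implyP [Dx0 nx0]].
case: (pselect (forall y, exists x, R (x, y))) => [allY|].
  have [g hg] := choice allY.
  exfalso; apply: (noinj g); last by move=> y; exact: RD (hg y).
  by move=> y y' gyy'; apply: (Rf (g y)); [exact: hg | rewrite gyy'; exact: hg].
move=> /existsNP [y0 ny0].
exfalso; apply: (maxR (R `|` [set (x0, y0)])).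
  split; first by move=> ? ?; left.
  by move=> BR; apply: nx0; exists y0; apply: BR; right.
split.
- by move=> x y [h|h]; [exact: RD h | case: h => -> _].
- move=> x y y' [h|h] [h'|h'].
  + exact: Rf h h'.
  + by case: h' => ex ey; subst; exfalso; apply: nx0; exists y.
  + by case: h => ex ey; subst; exfalso; apply: nx0; exists y'.
  + by case: h => _ ->; case: h' => _ ->.
- move=> x x' y [h|h] [h'|h'].
  + exact: Ri h h'.
  + by case: h' => ex ey; subst; exfalso; apply: ny0; exists x.
  + by case: h => ex ey; subst; exfalso; apply: ny0; exists x'.
  + by case: h => -> _; case: h' => -> _.
Qed.
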